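(* Let $(V,\mathcal{H})$ be a hypergraph and $X,Y\subseteq V$ disjoint. There exists a minimal hitting set $T\in\mathrm{Tr}(\mathcal{H})$ with $X\subseteq T\subseteq V\setminus Y$ if and only if there exists a family of edges $\{E_x\}_{x\in X}\subseteq\mathcal{H}$ such that (1) for every $x\in X$, $(E_x\setminus Y)\cap X=\{x\}$; and (2) for every edge $E\in\mathcal{H}$ with $(E\setminus Y)\cap X=\emptyset$ we have $E\setminus Y\not\subseteq\bigcup_{x\in X}(E_x\setminus Y)$.
   Context: $\mathrm{Tr}(\mathcal{H})$ denotes the set of inclusion-wise minimal hitting sets of $\mathcal{H}$ (sets meeting every edge, minimal under inclusion). *)

(* Defs.v *)
From mathcomp Require Import all_boot.
Set Implicit Arguments. Unset Strict Implicit. Unset Printing Implicit Defensive.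

(* A hypergraph (V, H): V a finite vertex type, H : {set {set V}} its edge set. *)

Definition hitting (V : finType) (H : {set {set V}}) : pred {set V} :=
  fun T => [forall E in H, T :&: E != set0].

Definition Tr (V : finType) (H : {set {set V}}) : {set {set V}} :=
  [set T | minset (hitting H) T].

(* Main.v *)
Require Import Defs.
From mathcomp Require Import all_boot.

Lemma hittingP (V : finType) (H : {set {set V}}) (T : {set V}) :
  reflect (forall E, E \in H -> exists2 v, v \in T & v \in E) (hitting H T).
Proof.
apply: (iffP forallP) => [h E EH|h E].
  have := h E; rewrite EH /= => /set0Pn[v]; rewrite inE => /andP[]; by exists v.
apply/implyP => EH; have [v vT vE] := h E EH; apply/set0Pn; exists v.
by rewrite inE vT.
Qed.

Theorem corollary1 (V : finType) (H : {set {set V}}) (X Y : {set V}) :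
  [disjoint X & Y] ->
  (exists T : {set V}, [/\ T \in Tr H, X \subset T & T \subset ~: Y]) <->
  (exists Ex : V -> {set V},
     (forall x, x \in X -> Ex x \in H /\ (Ex x :\: Y) :&: X = [set x]) /\
     (forall E, E \in H -> (E :\: Y) :&: X = set0 ->
        ~~ (E :\: Y \subset \bigcup_(x in X) (Ex x :\: Y)))).
Proof.
move=> dXY.
have XnY : forall x, x \in X -> x \notin Y.
  by move=> x xX; rewrite (disjointFr dXY xX).
split.
- case=> T [TTr XT TY].
  move: TTr; rewrite inE => /minsetP[hT minT].
  have exE : forall x, x \in X -> exists2 E, E \in H & E :&: T = [set x].
    move=> x xX.
    have xT : x \in T := subsetP XT x xX.
    have nh : ~~ hitting H (T :\ x).
      apply/negP => h.
      have := minT _ h (subsetDl _ _) => /setP/(_ x).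
      by rewrite !inE eqxx xT.
    have [E EH hE] : exists2 E, E \in H & E :&: (T :\ x) = set0.
      move: nh; rewrite /hitting negb_forall => /existsP[E].
      by rewrite negb_imply negbK => /andP[EH /eqP e]; exists E; rewrite // setIC.
    exists E => //.
    have [v vT vE] := (elimT (hittingP _ _ _) hT) E EH.
    apply/setP => w; rewrite in_set1 inE.
    have := hE; move=> /setP/(_ w); rewrite !inE.
    case: (eqVneq w x) => [->|wx] /=; last by move=> ->.
    move=> _; rewrite xT andbT.
    have := hE; move=> /setP/(_ v); rewrite !inE vT vE !andbT.
    by case: (eqVneq v x) => [<-|].
  pose Ex x := odflt set0 [pick E in H | E :&: T == [set x]].
  have ExP : forall x, x \in X -> Ex x \in H /\ Ex x :&: T = [set x].
    move=> x xX; rewrite /Ex.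
    case: pickP => [E /andP[EH /eqP eq]|no] /=; first by [].
    by have [E EH eq] := exE x xX; have := no E; rewrite /= EH eq eqxx.
  exists Ex; split.
    move=> x xX; have [EH eq] := ExP x xX; split=> //.
    apply/setP => w; rewrite in_set1 !inE.
    have := eq => /setP/(_ w); rewrite in_set1 inE.
    case: (eqVneq w x) => [->|wx] /=; first by rewrite XnY // xX => /andP[->].
    case: (boolP (w \in X)) => wX; rewrite ?andbF // => /negbT.
    by rewrite negb_and (subsetP XT w wX) orbF => /negbTE->; rewrite andbF.
  move=> E EH E0; apply/negP => sub.
  have [v vT vE] := (elimT (hittingP _ _ _) hT) E EH.
  have vY : v \notin Y.
    by have := subsetP TY v vT; rewrite inE.
  have := subsetP sub v; rewrite inE vY vE => /(_ isT) /bigcupP[x xX].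
  rewrite inE => /andP[_ vEx].
  have [_ eq] := ExP x xX.
  have := eq => /setP/(_ v); rewrite in_set1 inE vEx vT => /= vx.
  move: vx => /esym/eqP vx; subst x.
  by have := E0 => /setP/(_ v); rewrite !inE vY vE xX.
- case=> Ex [hEx hU].
  set S := X :|: (~: Y :\: \bigcup_(x in X) (Ex x :\: Y)).
  have hS : hitting H S.
    apply/hittingP => E EH.
    case: (eqVneq ((E :\: Y) :&: X) set0) => [E0|/set0Pn[v]].
      have := hU E EH E0 => /subsetPn[v vE vU].
      exists v => //; last by move: vE; rewrite inE => /andP[].
      by move: vE; rewrite !inE => /andP[-> _]; rewrite vU orbT.
    by rewrite !inE => /andP[/andP[_ vE] vX]; exists v; rewrite // inE vX.
  have [T minT TS] := minset_exists hS.
  exists T; split; first by rewrite inE.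
    apply/subsetP => x xX.
    have [ExH eq] := hEx x xX.
    have [v vT vE] := (elimT (hittingP _ _ _) (minsetp minT)) _ ExH.
    have := subsetP TS v vT; rewrite !inE.
    case/orP => [vX|/andP[nvU vY]]; last first.
      exfalso; move: nvU => /negP; apply; apply/bigcupP; exists x => //.
      by rewrite inE vE vY.
    have := eq => /setP/(_ v); rewrite !inE vX vE andbT (negbTE (XnY v vX)) /=.
    by move=> /esym/eqP <-.
  apply/subsetP => v vT; have := subsetP TS v vT; rewrite !inE.
  by case/orP => [vX|/andP[_ ->]] //; rewrite XnY.
Qed.
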